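(* For a coloured integer $k_x$ and $u,v,n\in\mathbb{N}$, let $d_{k_x}(u,v,n)$ be the number of admissible coloured partitions of size $n$ and weights $u$, $v$ whose largest part $\lambda_1$ satisfies $\lambda_1\le k_x$ in the total order of coloured integers (the empty partition is counted, with $n=u=v=0$), and set $d_{k_x}(u,v,n)=0$ whenever one of $u,v,n$ is negative. Then for all $u,v \in \mathbb{N}$ and all integers $k,n \geq 1$: \begin{align*} d_{(2k+1)_{ab}}(u,v,n)&=d_{(2k)_{b}}(u,v,n)+d_{(2k-1)_{a}}(u-1,v-1,n-2k-1),\\ d_{(2k+1)_{a}}(u,v,n)&=d_{(2k+1)_{ab}}(u,v,n)+d_{(2k)_{ab}}(u-1,v,n-2k-1),\\ d_{(2k+1)_{b^2}}(u,v,n)&=d_{(2k+1)_{a}}(u,v,n)+d_{(2k-1)_{a}}(u,v-2,n-2k-1),\\ d_{(2k+1)_{b}}(u,v,n)&=d_{(2k+1)_{b^2}}(u,v,n)+d_{(2k)_{a}}(u,v-1,n-2k-1),\\ d_{(2k+2)_{ab}}(u,v,n)&= d_{(2k+1)_{b}}(u,v,n)+d_{(2k)_{a}}(u-1,v-1,n-2k-2)+d_{(2k-1)_{a}}(u-1,v-2,n-4k-2),\\ d_{(2k+2)_{a}}(u,v,n)&= d_{(2k+2)_{ab}}(u,v,n)+d_{(2k)_{a}}(u-1,v,n-2k-2)+d_{(2k-1)_{a}}(u-1,v-1,n-4k-2),\\ d_{(2k+3)_{a^2}}(u,v,n)&= d_{(2k+2)_{a}}(u,v,n)+d_{(2k)_{a}}(u-2,v,n-2k-3)+d_{(2k-1)_{a}}(u-2,v-1,n-4k-3),\\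 d_{(2k+2)_{b}}(u,v,n)&=d_{(2k+3)_{a^2}}(u,v,n)+d_{(2k+1)_{a}}(u,v-1,n-2k-2). \end{align*}
   Context: Coloured integers: every positive integer $k$ occurs in the three colours $a$, $b$, $ab$ (written $k_a$, $k_b$, $k_{ab}$). In addition, odd positive integers occur in the colours $a^2$ and $b^2$: $k_{b^2}$ for every odd $k\ge 1$ and $k_{a^2}$ for every odd $k \geq 3$. The integer value of $k_x$ is $k$ and its colour is $x$. These coloured integers are totally ordered by $$1_{ab} < 1_a < 1_{b^2} <1_{b} <2_{ab} < 2_a <3_{a^2} < 2_{b} <3_{ab} < 3_a < 3_{b^2} <3_b <4_{ab}<4_a<5_{a^2}<4_b<5_{ab}<\cdots,$$ that is, for every odd $m\ge1$: $m_{ab}<m_a<m_{b^2}<m_b<(m+1)_{ab}<(m+1)_a<(m+2)_{a^2}<(m+1)_b<(m+2)_{ab}$. Difference conditions: for a coloured integer $\lambda$ (the ''upper'' part) of colour $x$ and a coloured integer $\mu$ (the ''lower'' part) of colour $y$, a minimal difference $A(\lambda,\mu)$ is defined as follows, where the row is determined by the colour and the parity of the integer value of $\lambda$, and the entries are listed for $y = a, b, ab, a^2, b^2$ in this order: - $\lambda$ of colour $a$, odd: $2,2,1,2,2$; - $\lambda$ of colour $b^2$: $2,3,2,2,4$; - $\lambda$ of colour $b$, odd: $1,2,1,2,2$; - $\lambda$ of colour $ab$, even: $2,2,2,3,3$; - $\lambda$ of colour $a$, even: $2,2,2,3,3$; - $\lambda$ of colour $a^2$: $3,3,3,4,4$;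 - $\lambda$ of colour $b$, even: $1,2,1,1,3$; - $\lambda$ of colour $ab$, odd: $2,3,2,2,3$. An admissible coloured partition is a finite (possibly empty) sequence $\lambda_1,\dots,\lambda_s$ of coloured integers, none of which equals $1_{ab}$ or $1_{b^2}$, such that for every $1\le i<s$ the integer values satisfy $\lambda_i-\lambda_{i+1}\ge A(\lambda_i,\lambda_{i+1})$. Its size $n$ is the sum of the integer values of its parts. Its weight $u$ is the number of parts of colour $a$ or $ab$ plus twice the number of parts of colour $a^2$; its weight $v$ is the number of parts of colour $b$ or $ab$ plus twice the number of parts of colour $b^2$. *)

(* Defs.v *)
From mathcomp Require Import all_boot all_order all_algebra.
Set Implicit Arguments. Unset Strict Implicit. Unset Printing Implicit Defensive.
Import GRing.Theory Num.Theory.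

Inductive colour := Ca | Cb | Cab | Ca2 | Cb2.
Definition colours : seq colour := [:: Ca; Cb; Cab; Ca2; Cb2].

Definition colint := (nat * colour)%type.
Definition cval (l : colint) : nat := l.1.
Definition ccol (l : colint) : colour := l.2.

Definition valid_colint (l : colint) : bool :=
  match l.2 with
  | Ca | Cb | Cab => 0 < l.1
  | Cb2 => odd l.1
  | Ca2 => odd l.1 && (3 <= l.1)
  end.

(* Position of a coloured integer in the total order
   1_ab < 1_a < 1_b2 < 1_b < 2_ab < 2_a < 3_a2 < 2_b < 3_ab < ...
   For odd m = 2j+1 the block m_ab < m_a < m_b2 < m_b < (m+1)_ab < (m+1)_a
   < (m+2)_a2 < (m+1)_b gets ranks 8j, ..., 8j+7. *)
Definition crank (l : colint) : nat :=
  let k := l.1 in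
  if odd k then
    let j := k./2 in
    match l.2 with
    | Cab => 8 * j | Ca => 8 * j + 1 | Cb2 => 8 * j + 2 | Cb => 8 * j + 3
    | Ca2 => 8 * j - 2
    end
  else
    let j := k./2 - 1 in
    match l.2 with
    | Cab => 8 * j + 4 | Ca => 8 * j + 5 | Cb => 8 * j + 7
    | Ca2 => 8 * j + 6 (* not a coloured integer *)
    | Cb2 => 8 * j + 2 (* not a coloured integer *)
    end.

Definition cle (l m : colint) : bool := crank l <= crank m.

Definition Adiff (l m : colint) : nat :=
  let row :=
    match l.2, odd l.1 with
    | Ca, true => (2, 2, 1, 2, 2)
    | Cb2, _ => (2, 3, 2, 2, 4)
    | Cb, true => (1, 2, 1, 2, 2)
    | Cab, false => (2, 2, 2, 3, 3)
    | Ca, false => (2, 2, 2, 3, 3)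
    | Ca2, _ => (3, 3, 3, 4, 4)
    | Cb, false => (1, 2, 1, 1, 3)
    | Cab, true => (2, 3, 2, 2, 3)
    end in
  match row with (ea, eb, eab, ea2, eb2) =>
    match m.2 with
    | Ca => ea | Cb => eb | Cab => eab | Ca2 => ea2 | Cb2 => eb2
    end
  end.

Definition forbidden_part (l : colint) : bool :=
  match l with
  | (1, Cab) | (1, Cb2) => true
  | _ => false
  end.

Fixpoint diff_ok (s : seq colint) : bool :=
  match s with
  | l :: ((m :: _) as s') => (cval m + Adiff l m <= cval l) && diff_ok s'
  | _ => true
  end.

Definition admissible (s : seq colint) : bool :=
  all valid_colint s && all (fun l => ~~ forbidden_part l) s && diff_ok s.

Definition psize (s : seq colint) : nat := sumn (map cval s).

Definition wu_part (l : colint) : nat :=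
  match l.2 with Ca | Cab => 1 | Ca2 => 2 | _ => 0 end.
Definition wv_part (l : colint) : nat :=
  match l.2 with Cb | Cab => 1 | Cb2 => 2 | _ => 0 end.
Definition weight_u (s : seq colint) : nat := sumn (map wu_part s).
Definition weight_v (s : seq colint) : nat := sumn (map wv_part s).

Definition largest_le (c : colint) (s : seq colint) : bool :=
  if s is l :: _ then cle l c else true.

(* Finite enumeration of candidates: all sequences of length <= n whose
   entries are coloured integers of value in [1, n]; every partition of size n
   is among them, each exactly once. *)
Definition parts_upto (n : nat) : seq colint :=
  [seq l <- flatten [seq [seq (k, x) | x <- colours] | k <- iota 1 n]
     | valid_colint l].

Fixpoint seqs_of_len (m : nat) (L : seq colint) : seq (seq colint) :=
  if m is m'.+1 then flatten [seq [seq x :: s | s <- seqs_of_len m' L] | x <- L]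
  else [:: [::]].

Definition candidates (n : nat) : seq (seq colint) :=
  flatten [seq seqs_of_len m (parts_upto n) | m <- iota 0 n.+1].

Definition dcount (c : colint) (u v n : int) : nat :=
  if (0 <= u)%R && (0 <= v)%R && (0 <= n)%R then
    count (fun s => [&& admissible s, psize s == `|n|%N,
                        weight_u s == `|u|%N, weight_v s == `|v|%N
                      & largest_le c s]) (candidates `|n|%N)
  else 0.

(* Main.v *)
From HB Require Import structures.
Require Import Defs.
From mathcomp Require Import all_boot all_order all_algebra zify.
Set Implicit Arguments. Unset Strict Implicit. Unset Printing Implicit Defensive.

Definition col_eqb (x y : colour) := match x, y with
  Ca,Ca|Cb,Cb|Cab,Cab|Ca2,Ca2|Cb2,Cb2 => true | _,_ => false end.
Lemma col_eqP : Equality.axiom col_eqb. Proof. by case; case; constructor. Qed.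
HB.instance Definition _ := hasDecEq.Build colour col_eqP.
Lemma mem_parts n l : (l \in parts_upto n) = valid_colint l && (1 <= l.1 <= n).
Proof.
case: l => k x; rewrite mem_filter; congr (_ && _).
apply/flattenP/idP => [[t /mapP [k' Hk' ->]] Ht|Hk].
  by rewrite mem_iota add1n ltnS in Hk'; case/mapP: Ht => x0 _ [-> _].
exists [seq (k, x0) | x0 <- colours]; first by apply/mapP; exists k => //; rewrite mem_iota ltnS.
apply/mapP; exists x => //; by case: x {Hk}.
Qed.

Lemma uniq_parts n : uniq (parts_upto n).
Proof.
apply: filter_uniq; apply: allpairs_uniq; first exact: iota_uniq.
  by [].
by move=> [a b] [c d] _ _ /= [-> ->].
Qed.

Lemma mem_seqs m L s : (s \in seqs_of_len m L) = (size s == m) && all (mem L) s.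
Proof.
elim: m s => [|m IH] [|x s] //=.
  by apply/negbTE/allpairsP => [[[a b] [_ _ /=]]].
apply/allpairsP/and3P => [[[a b] [/= Ha Hb [-> ->]]]|[Hs Hx Ha]].
  by move: Hb; rewrite IH => /andP[/eqP -> ->]; rewrite Ha.
by exists (x, s); split=> //=; rewrite IH -eqSS Hs.
Qed.

Lemma uniq_seqs m L : uniq L -> uniq (seqs_of_len m L).
Proof.
move=> UL; elim: m => [|m IH] //=; apply: allpairs_uniq => //.
by move=> [a b] [c d] _ _ /= [-> ->].
Qed.

Lemma mem_cand n s : (s \in candidates n) = (size s <= n) && all (mem (parts_upto n)) s.
Proof.
apply/flattenP/andP => [[t /mapP [m Hm ->]]|[H1 H2]].
  rewrite mem_iota ltnS in Hm; rewrite mem_seqs => /andP[/eqP Hs ->]; split=> //.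
  by rewrite Hs.
exists (seqs_of_len (size s) (parts_upto n)); last by rewrite mem_seqs eqxx.
by apply/mapP; exists (size s) => //; rewrite mem_iota ltnS.
Qed.

Lemma uniq_cand n : uniq (candidates n).
Proof.
rewrite /candidates; elim: (iota 0 n.+1) (iota_uniq 0 n.+1) => [|m l IH] //= /andP[Hm Hl].
rewrite cat_uniq uniq_seqs ?uniq_parts // IH // andbT.
apply/hasPn => s /flattenP [t /mapP [m' Hm' ->]]; rewrite !mem_seqs => /andP[/eqP Hs _].
by apply/negP => /andP[/eqP Hs' _]; move: Hm; rewrite -Hs' Hs Hm'.
Qed.

Definition validnf (l : colint) := valid_colint l && ~~ forbidden_part l.
Definition firstin (S : pred colint) (s : seq colint) := if s is l :: _ then S l else true.
Definition Aset (p : colint) : pred colint := fun m => cval m + Adiff p m <= cval p.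
Definition Cnt (Q : pred (seq colint)) n :=
  count (fun s => admissible s && (psize s == n) && Q s) (candidates n).
Definition stats u v (s : seq colint) := (weight_u s == u) && (weight_v s == v).
Definition E (S : pred colint) u v n := Cnt (fun s => stats u v s && firstin S s) n.
Definition NE (p : colint) u v n :=
  Cnt (fun s => stats u v s && (if s is l :: _ then l == p else false)) n.

Lemma adm_cons p t : admissible (p :: t) = [&& validnf p, firstin (Aset p) t & admissible t].
Proof.
rewrite /admissible /validnf.
have -> : diff_ok (p :: t) = firstin (Aset p) t && diff_ok t by case: t.
rewrite /=; by case: (valid_colint p); case: (forbidden_part p); case: (firstin _ _); case: (all _ _); case: (all _ _).
Qed.

Lemma validnf_pos l : validnf l -> 1 <= l.1.
Proof.
case: l => [[|j] x] //; rewrite /validnf /valid_colint /=; case: x => //.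
Qed.

Lemma adm_cand s : admissible s -> s \in candidates (psize s).
Proof.
move=> H; rewrite mem_cand.
suff: (size s <= psize s) && all (fun l => validnf l && (l.1 <= psize s)) s.
  case/andP=> -> /allP Ha; apply/allP => l Hl; change (l \in parts_upto (psize s)); rewrite mem_parts.
  by case/andP: (Ha l Hl) => /andP[Hv _] ->; rewrite Hv (validnf_pos (proj1 (andP (Ha l Hl)))).
elim: s H => [|l t IH] // H; move: H; rewrite adm_cons => /and3P[Hl _ Ht].
have /andP[H1 /allP H2] := IH Ht.
have Hp := validnf_pos Hl.
rewrite /psize /= -/(psize t) /cval.
apply/andP; split; first by lia.
apply/andP; split; first by rewrite Hl leq_addr.
apply/allP => m Hm; case/andP: (H2 m Hm) => -> /= Hm'.
by rewrite (leq_trans Hm') // leq_addl.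
Qed.

Lemma count_uniq_eq (T : eqType) (P : pred T) l1 l2 : uniq l1 -> uniq l2 ->
  (forall x, P x -> (x \in l1) = (x \in l2)) -> count P l1 = count P l2.
Proof.
move=> U1 U2 H; rewrite -!size_filter; apply: perm_size; apply: uniq_perm;
  rewrite ?filter_uniq // => x; rewrite !mem_filter.
by case Px: (P x) => //=; apply: H.
Qed.

Lemma cons_inj (p : colint) : injective (cons p).
Proof. by move=> a b []. Qed.

Lemma NE_cons p u v n : validnf p ->
  NE p u v n = if [&& p.1 <= n, wu_part p <= u & wv_part p <= v]
               then E (Aset p) (u - wu_part p) (v - wv_part p) (n - p.1) else 0.
Proof.
move=> Hp; rewrite /NE /Cnt.
set P := (fun s => _).
have -> : count P (candidates n) = count P (map (cons p) (candidates (n - p.1))).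
  apply: count_uniq_eq; first exact: uniq_cand.
    by rewrite map_inj_uniq ?uniq_cand // => a b [].
  move=> [|l t]; rewrite /P ?andbF // => /and3P[/andP[Ha /eqP Hs] _ /eqP Hl].
  subst l; rewrite (mem_map (@cons_inj p)).
  move: (adm_cand Ha); rewrite Hs => ->.
  move: Ha; rewrite adm_cons => /and3P[_ _ Ht]; have := adm_cand Ht.
  suff -> : psize t = n - p.1 by [].
  by rewrite -Hs /psize /= /cval; lia.
rewrite count_map.
case: ifP => [/and3P[H1 H2 H3]|Hg].
  rewrite /E /Cnt; apply: eq_count => t; rewrite /P /=.
  rewrite adm_cons Hp eqxx andbT /stats /psize /weight_u /weight_v /=.
  rewrite -/(psize t) -/(weight_u t) -/(weight_v t).
  have E1 : (p.1 + psize t == n) = (psize t == n - p.1) by apply/eqP/eqP; lia.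
  have E2 : (wu_part p + weight_u t == u) = (weight_u t == u - wu_part p) by apply/eqP/eqP; lia.
  have E3 : (wv_part p + weight_v t == v) = (weight_v t == v - wv_part p) by apply/eqP/eqP; lia.
  rewrite E1 E2 E3.
  by case: (firstin _ _); case: (admissible t); case: (_ == _); case: (_ == _); case: (_ == _).
apply/eqP; rewrite -leqn0 leqNgt -has_count; apply/hasPn => t _; rewrite /P /=.
rewrite /stats /psize /weight_u /weight_v /=.
apply/negP => /andP[/andP[_ /eqP A1] /andP[/andP[/eqP A2 /eqP A3] _]].
by move: Hg; rewrite -A1 -A2 -A3 leq_addr !leq_addr.
Qed.

Lemma E_ext S S' u v n : (forall m, validnf m -> S m = S' m) -> E S u v n = E S' u v n.
Proof.
move=> H; apply: eq_count => [[|l t]] //=.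
case Ha: (admissible (l :: t)) => //=.
by move: Ha; rewrite adm_cons => /and3P[Hl _ _]; rewrite H.
Qed.

Lemma E_split S S' p u v n : (forall m, validnf m -> S m = S' m || (m == p)) -> ~~ S' p ->
  E S u v n = E S' u v n + NE p u v n.
Proof.
move=> H Hp; rewrite /E /NE /Cnt.
set a := (fun s => _ && _ && (stats u v s && firstin S' s)).
set b := (X in _ + count X _).
rewrite -(count_predUI a b).
have -> : count (predI a b) (candidates n) = 0%N.
  rewrite -(count_pred0 (candidates n)); apply: eq_count => [[|l t]] //; rewrite /a /b /= ?andbF //.
  case: (l =P p) => [->|]; last by rewrite !andbF.
  by rewrite (negbTE Hp) !andbF.
rewrite addn0; apply: eq_count => [[|l t]] //; rewrite /a /b /=.
  by rewrite !andbF orbF.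
case Ha: (admissible (l :: t)) => //=.
move: Ha; rewrite adm_cons => /and3P[Hl _ _]; rewrite H //.
by case: (_ == _); case: (stats _ _ _); case: (S' l); case: (l == p).
Qed.

Definition dn (c : colint) := E (fun m => cle m c).

Lemma dcount_nat c (u v n : nat) : dcount c (Posz u) (Posz v) (Posz n) = dn c u v n.
Proof.
rewrite /dcount; rewrite !le0z_nat.
change (count (fun s => [&& admissible s, psize s == n, weight_u s == u, weight_v s == v
         & largest_le c s]) (candidates n) = dn c u v n).
rewrite /dn /E /Cnt; apply: eq_count => s.
rewrite /stats /largest_le.
by case: s => [|l t] /=; rewrite -!andbA.
Qed.

Import GRing.Theory Num.Theory.
Local Open Scope ring_scope.
Lemma dcount_sub c (u a v b n m : nat) :
  dcount c (u%:Z - a%:Z) (v%:Z - b%:Z) (n%:Z - m%:Z) =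
  if [&& (a <= u)%N, (b <= v)%N & (m <= n)%N] then dn c (u - a)%N (v - b)%N (n - m)%N else 0%N.
Proof.
case: ifP => [/and3P[H1 H2 H3]|H].
  by rewrite !subzn // dcount_nat.
rewrite /dcount !subr_ge0 !lez_nat.
by case: (a <= u)%N H; case: (b <= v)%N; case: (m <= n)%N.
Qed.
Local Close Scope ring_scope.

Lemma forbE l : forbidden_part l = (l.1 == 1) && ((l.2 == Cab) || (l.2 == Cb2)).
Proof. by case: l => [[|[|j]] []]. Qed.

Lemma col_eqE (x y : colour) : (x == y) = col_eqb x y. Proof. by []. Qed.

Ltac kill_odd := repeat match goal with |- context [odd ?t] =>
  let H := fresh in have H := odd_double_half t; move: H; case: (odd t) => /= H end.

Ltac setl := case=> ? []; rewrite /validnf forbE /cle /Aset /crank /Adiff /cval /valid_colint /= ?xpair_eqE ?col_eqE /=; kill_odd; lia.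

Ltac setl2 := case=> ? []; rewrite /validnf forbE /cle /Aset /crank /Adiff /cval /valid_colint /= ?xpair_eqE ?col_eqE /=; kill_odd; lia.
Ltac pt := rewrite /validnf forbE /cle /crank /valid_colint /= ?xpair_eqE ?col_eqE /=; kill_odd; lia.

Section Sets.
Variable k : nat.
Hypothesis Hk : 1 <= k.
Lemma s1 m : validnf m -> cle m (2*k+1, Cab) = cle m (2*k, Cb) || (m == (2*k+1, Cab)).
Proof. move: m; setl2. Qed.
Lemma a1 m : validnf m -> Aset (2*k+1, Cab) m = cle m (2*k-1, Ca).
Proof. move: m; setl2. Qed.
Lemma s2 m : validnf m -> cle m (2*k+1, Ca) = cle m (2*k+1, Cab) || (m == (2*k+1, Ca)).
Proof. move: m; setl2. Qed.
Lemma a2 m : validnf m -> Aset (2*k+1, Ca) m = cle m (2*k, Cab).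
Proof. move: m; setl2. Qed.
Lemma s3 m : validnf m -> cle m (2*k+1, Cb2) = cle m (2*k+1, Ca) || (m == (2*k+1, Cb2)).
Proof. move: m; setl2. Qed.
Lemma a3 m : validnf m -> Aset (2*k+1, Cb2) m = cle m (2*k-1, Ca).
Proof. move: m; setl2. Qed.
Lemma s4 m : validnf m -> cle m (2*k+1, Cb) = cle m (2*k+1, Cb2) || (m == (2*k+1, Cb)).
Proof. move: m; setl2. Qed.
Lemma a4 m : validnf m -> Aset (2*k+1, Cb) m = cle m (2*k, Ca).
Proof. move: m; setl2. Qed.
Lemma s5 m : validnf m -> cle m (2*k+2, Cab) = cle m (2*k+1, Cb) || (m == (2*k+2, Cab)).
Proof. move: m; setl2. Qed.
Lemma a5 m : validnf m -> Aset (2*k+2, Cab) m = cle m (2*k, Ca) || (m == (2*k, Cb)).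
Proof. move: m; setl2. Qed.
Lemma a5b m : validnf m -> Aset (2*k, Cb) m = cle m (2*k-1, Ca).
Proof. move: m; setl2. Qed.
Lemma s6 m : validnf m -> cle m (2*k+2, Ca) = cle m (2*k+2, Cab) || (m == (2*k+2, Ca)).
Proof. move: m; setl2. Qed.
Lemma a6 m : validnf m -> Aset (2*k+2, Ca) m = cle m (2*k, Ca) || (m == (2*k, Cb)).
Proof. move: m; setl2. Qed.
Lemma s7 m : validnf m -> cle m (2*k+3, Ca2) = cle m (2*k+2, Ca) || (m == (2*k+3, Ca2)).
Proof. move: m; setl2. Qed.
Lemma a7 m : validnf m -> Aset (2*k+3, Ca2) m = cle m (2*k, Ca) || (m == (2*k, Cb)).
Proof. move: m; setl2. Qed.
Lemma s8 m : validnf m -> cle m (2*k+2, Cb) = cle m (2*k+3, Ca2) || (m == (2*k+2, Cb)).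
Proof. move: m; setl2. Qed.
Lemma a8 m : validnf m -> Aset (2*k+2, Cb) m = cle m (2*k+1, Ca).
Proof. move: m; setl2. Qed.

Lemma p1 : ~~ cle (2*k+1, Cab) (2*k, Cb) && validnf (2*k+1, Cab). Proof. pt. Qed.
Lemma p2 : ~~ cle (2*k+1, Ca) (2*k+1, Cab) && validnf (2*k+1, Ca). Proof. pt. Qed.
Lemma p3 : ~~ cle (2*k+1, Cb2) (2*k+1, Ca) && validnf (2*k+1, Cb2). Proof. pt. Qed.
Lemma p4 : ~~ cle (2*k+1, Cb) (2*k+1, Cb2) && validnf (2*k+1, Cb). Proof. pt. Qed.
Lemma p5 : ~~ cle (2*k+2, Cab) (2*k+1, Cb) && validnf (2*k+2, Cab). Proof. pt. Qed.
Lemma p5b : ~~ cle (2*k, Cb) (2*k, Ca) && validnf (2*k, Cb). Proof. pt. Qed.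
Lemma p6 : ~~ cle (2*k+2, Ca) (2*k+2, Cab) && validnf (2*k+2, Ca). Proof. pt. Qed.
Lemma p7 : ~~ cle (2*k+3, Ca2) (2*k+2, Ca) && validnf (2*k+3, Ca2). Proof. pt. Qed.
Lemma p8 : ~~ cle (2*k+2, Cb) (2*k+3, Ca2) && validnf (2*k+2, Cb). Proof. pt. Qed.
End Sets.

Lemma Estep S S' p c a b u v n :
  (forall m, validnf m -> S m = S' m || (m == p)) -> ~~ S' p && validnf p ->
  p.1 = c -> wu_part p = a -> wv_part p = b ->
  E S u v n = E S' u v n + (if [&& c <= n, a <= u & b <= v]
                            then E (Aset p) (u - a) (v - b) (n - c) else 0).
Proof.
move=> H /andP[H1 H2] <- <- <-; rewrite (E_split u v n H H1) NE_cons //.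
Qed.

Section Ids.
Variables (k u v n : nat).
Hypothesis Hk : 1 <= k.

Lemma id1 : dn (2*k+1, Cab) u v n = dn (2*k, Cb) u v n +
  (if [&& 1 <= u, 1 <= v & 2*k+1 <= n] then dn (2*k-1, Ca) (u-1) (v-1) (n-(2*k+1)) else 0).
Proof.
rewrite /dn (@Estep _ _ _ (2*k+1) 1 1 u v n (s1 Hk) (p1 Hk) erefl erefl erefl); congr (_ + _).
rewrite (E_ext _ _ _ (a1 Hk)).
by case: ifP => H1; case: ifP => H2 //; lia.
Qed.

Lemma id2 : dn (2*k+1, Ca) u v n = dn (2*k+1, Cab) u v n +
  (if [&& 1 <= u, 0 <= v & 2*k+1 <= n] then dn (2*k, Cab) (u-1) (v-0) (n-(2*k+1)) else 0).
Proof.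
rewrite /dn (@Estep _ _ _ (2*k+1) 1 0 u v n (s2 Hk) (p2 Hk) erefl erefl erefl); congr (_ + _).
rewrite (E_ext _ _ _ (a2 Hk)).
by case: ifP => H1; case: ifP => H2 //; lia.
Qed.

Lemma id3 : dn (2*k+1, Cb2) u v n = dn (2*k+1, Ca) u v n +
  (if [&& 0 <= u, 2 <= v & 2*k+1 <= n] then dn (2*k-1, Ca) (u-0) (v-2) (n-(2*k+1)) else 0).
Proof.
rewrite /dn (@Estep _ _ _ (2*k+1) 0 2 u v n (s3 Hk) (p3 Hk) erefl erefl erefl); congr (_ + _).
rewrite (E_ext _ _ _ (a3 Hk)).
by case: ifP => H1; case: ifP => H2 //; lia.
Qed.

Lemma id4 : dn (2*k+1, Cb) u v n = dn (2*k+1, Cb2) u v n +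
  (if [&& 0 <= u, 1 <= v & 2*k+1 <= n] then dn (2*k, Ca) (u-0) (v-1) (n-(2*k+1)) else 0).
Proof.
rewrite /dn (@Estep _ _ _ (2*k+1) 0 1 u v n (s4 Hk) (p4 Hk) erefl erefl erefl); congr (_ + _).
rewrite (E_ext _ _ _ (a4 Hk)).
by case: ifP => H1; case: ifP => H2 //; lia.
Qed.

Lemma id8 : dn (2*k+2, Cb) u v n = dn (2*k+3, Ca2) u v n +
  (if [&& 0 <= u, 1 <= v & 2*k+2 <= n] then dn (2*k+1, Ca) (u-0) (v-1) (n-(2*k+2)) else 0).
Proof.
rewrite /dn (@Estep _ _ _ (2*k+2) 0 1 u v n (s8 Hk) (p8 Hk) erefl erefl erefl); congr (_ + _).
rewrite (E_ext _ _ _ (a8 Hk)).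
by case: ifP => H1; case: ifP => H2 //; lia.
Qed.

Lemma id5 : dn (2*k+2, Cab) u v n = dn (2*k+1, Cb) u v n +
  (if [&& 1 <= u, 1 <= v & 2*k+2 <= n] then dn (2*k, Ca) (u-1) (v-1) (n-(2*k+2)) else 0) +
  (if [&& 1 <= u, 2 <= v & 4*k+2 <= n] then dn (2*k-1, Ca) (u-1) (v-2) (n-(4*k+2)) else 0).
Proof.
rewrite /dn (@Estep _ _ _ (2*k+2) 1 1 u v n (s5 Hk) (p5 Hk) erefl erefl erefl) -addnA; congr (_ + _).
rewrite (@Estep _ _ _ (2*k) 0 1 _ _ _ (a5 Hk) (p5b Hk) erefl erefl erefl).
rewrite (E_ext _ _ _ (a5b Hk)) !subn0.
have -> : v - 1 - 1 = v - 2 by lia.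
have -> : n - (2*k+2) - 2*k = n - (4*k+2) by lia.
by repeat (case: ifP => ?); rewrite ?addn0 ?add0n //; lia.
Qed.

Lemma id6 : dn (2*k+2, Ca) u v n = dn (2*k+2, Cab) u v n +
  (if [&& 1 <= u, 0 <= v & 2*k+2 <= n] then dn (2*k, Ca) (u-1) (v-0) (n-(2*k+2)) else 0) +
  (if [&& 1 <= u, 1 <= v & 4*k+2 <= n] then dn (2*k-1, Ca) (u-1) (v-1) (n-(4*k+2)) else 0).
Proof.
rewrite /dn (@Estep _ _ _ (2*k+2) 1 0 u v n (s6 Hk) (p6 Hk) erefl erefl erefl) -addnA; congr (_ + _).
rewrite (@Estep _ _ _ (2*k) 0 1 _ _ _ (a6 Hk) (p5b Hk) erefl erefl erefl).
rewrite (E_ext _ _ _ (a5b Hk)) !subn0.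
have -> : n - (2*k+2) - 2*k = n - (4*k+2) by lia.
by repeat (case: ifP => ?); rewrite ?addn0 ?add0n //; lia.
Qed.

Lemma id7 : dn (2*k+3, Ca2) u v n = dn (2*k+2, Ca) u v n +
  (if [&& 2 <= u, 0 <= v & 2*k+3 <= n] then dn (2*k, Ca) (u-2) (v-0) (n-(2*k+3)) else 0) +
  (if [&& 2 <= u, 1 <= v & 4*k+3 <= n] then dn (2*k-1, Ca) (u-2) (v-1) (n-(4*k+3)) else 0).
Proof.
rewrite /dn (@Estep _ _ _ (2*k+3) 2 0 u v n (s7 Hk) (p7 Hk) erefl erefl erefl) -addnA; congr (_ + _).
rewrite (@Estep _ _ _ (2*k) 0 1 _ _ _ (a7 Hk) (p5b Hk) erefl erefl erefl).
rewrite (E_ext _ _ _ (a5b Hk)) !subn0.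
have -> : n - (2*k+3) - 2*k = n - (4*k+3) by lia.
by repeat (case: ifP => ?); rewrite ?addn0 ?add0n //; lia.
Qed.
End Ids.

Import GRing.Theory Num.Theory.
Local Open Scope ring_scope.

Lemma dcount_int c (x y z : int) (u a v b n m : nat) :
  x = u%:Z - a%:Z -> y = v%:Z - b%:Z -> z = n%:Z - m%:Z ->
  dcount c x y z = if [&& (a <= u)%N, (b <= v)%N & (m <= n)%N]
                   then dn c (u - a)%N (v - b)%N (n - m)%N else 0%N.
Proof. by move=> -> -> ->; exact: dcount_sub. Qed.

Theorem lemma3p1 (u v k n : nat) (hk : (1 <= k)%N) (hn : (1 <= n)%N) :
  let U := (u : int) in let V := (v : int) in let N := (n : int) in
  let K := (k : int) in
  [/\ dcount ((2*k+1)%N, Cab) U V N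
        = (dcount ((2*k)%N, Cb) U V N
           + dcount ((2*k-1)%N, Ca) (U-1) (V-1) (N-2*K-1))%N,
      dcount ((2*k+1)%N, Ca) U V N
        = (dcount ((2*k+1)%N, Cab) U V N
           + dcount ((2*k)%N, Cab) (U-1) V (N-2*K-1))%N,
      dcount ((2*k+1)%N, Cb2) U V N
        = (dcount ((2*k+1)%N, Ca) U V N
           + dcount ((2*k-1)%N, Ca) U (V-2) (N-2*K-1))%N,
      dcount ((2*k+1)%N, Cb) U V N
        = (dcount ((2*k+1)%N, Cb2) U V N
           + dcount ((2*k)%N, Ca) U (V-1) (N-2*K-1))%N
    & [/\ dcount ((2*k+2)%N, Cab) U V N
          = (dcount ((2*k+1)%N, Cb) U V N
             + dcount ((2*k)%N, Ca) (U-1) (V-1) (N-2*K-2)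
             + dcount ((2*k-1)%N, Ca) (U-1) (V-2) (N-4*K-2))%N,
        dcount ((2*k+2)%N, Ca) U V N
          = (dcount ((2*k+2)%N, Cab) U V N
             + dcount ((2*k)%N, Ca) (U-1) V (N-2*K-2)
             + dcount ((2*k-1)%N, Ca) (U-1) (V-1) (N-4*K-2))%N,
        dcount ((2*k+3)%N, Ca2) U V N
          = (dcount ((2*k+2)%N, Ca) U V N
             + dcount ((2*k)%N, Ca) (U-2) V (N-2*K-3)
             + dcount ((2*k-1)%N, Ca) (U-2) (V-1) (N-4*K-3))%N
      & dcount ((2*k+2)%N, Cb) U V N
          = (dcount ((2*k+3)%N, Ca2) U V N
             + dcount ((2*k+1)%N, Ca) U (V-1) (N-2*K-2))%N]].
Proof.
move=> U V N K; rewrite {}/U {}/V {}/N {}/K.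
split; [| | | | split].
- rewrite !dcount_nat (@dcount_int ((2*k-1)%N, Ca) _ _ _ u 1 v 1 n (2*k+1)); [exact: id1 | lia..].
- rewrite !dcount_nat (@dcount_int ((2*k)%N, Cab) _ _ _ u 1 v 0 n (2*k+1)); [exact: id2 | lia..].
- rewrite !dcount_nat (@dcount_int ((2*k-1)%N, Ca) _ _ _ u 0 v 2 n (2*k+1)); [exact: id3 | lia..].
- rewrite !dcount_nat (@dcount_int ((2*k)%N, Ca) _ _ _ u 0 v 1 n (2*k+1)); [exact: id4 | lia..].
- rewrite !dcount_nat (@dcount_int ((2*k)%N, Ca) _ _ _ u 1 v 1 n (2*k+2))
    ?(@dcount_int ((2*k-1)%N, Ca) _ _ _ u 1 v 2 n (4*k+2)); [exact: id5 | lia..].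
- rewrite !dcount_nat (@dcount_int ((2*k)%N, Ca) _ _ _ u 1 v 0 n (2*k+2))
    ?(@dcount_int ((2*k-1)%N, Ca) _ _ _ u 1 v 1 n (4*k+2)); [exact: id6 | lia..].
- rewrite !dcount_nat (@dcount_int ((2*k)%N, Ca) _ _ _ u 2 v 0 n (2*k+3))
    ?(@dcount_int ((2*k-1)%N, Ca) _ _ _ u 2 v 1 n (4*k+3)); [exact: id7 | lia..].
- rewrite !dcount_nat (@dcount_int ((2*k+1)%N, Ca) _ _ _ u 0 v 1 n (2*k+2)); [exact: id8 | lia..].
Qed.
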